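(* For every $i\in\{1,\dots,K\}$, $$\big\|\mathbb P(\tilde v_i\in\cdot)-\mathbb Q\big\|_{tv}\le \mathbb E\!\left(\min(pv_1,1)\,\frac{v_1}{V}\right).$$
   Context: Uniform urn model. Let $v$ be a random variable with values in the positive integers (number of balls of a given color), let $K\ge 1$, let $v_1,\dots,v_K$ be i.i.d. copies of $v$ (numbers of balls of colors $1,\dots,K$) and $V=v_1+\dots+v_K$. Fix a sampling fraction $p\in(0,1)$, with $pV$ assumed to be an integer. Conditionally on $\mathcal F=\{v_1,\dots,v_K\}$, $pV$ balls are drawn with replacement, independently, each drawn ball having color $i$ with probability $v_i/V$. Let $\tilde v_i$ denote the number of drawn balls of color $i$. Let $\mathbb Q$ be the probability distribution on $\{0,1,2,\dots\}$ given by $\mathbb Q_j=\mathbb E\big(\frac{(pv)^j}{j!}e^{-pv}\big)$, $j\ge0$. For integer-valued laws $\mu,\nu$, $\|\mu-\nu\|_{tv}=\sup_{A\subset\mathbb N}|\mu(A)-\nu(A)|=\frac12\sum_{n\ge0}|\mu(\{n\})-\nu(\{n\})|$. *)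

(* Defs.v *)
From Stdlib Require Import Reals List ClassicalEpsilon Arith.
Open Scope R_scope.

(* Value of a series: its limit if it converges, otherwise 0 (all series
   used below have nonnegative bounded terms and do converge). *)
Definition ser (f : nat -> R) : R :=
  epsilon (inhabits 0) (fun l => infinite_sum f l).

(* Expectation over K i.i.d. copies (v_1,...,v_K), represented as a list
   [v_1; ...; v_K], of a function f, where pmf is the law of v. *)
Fixpoint expK (pmf : nat -> R) (k : nat) (f : list nat -> R) : R :=
  match k with
  | O => f nil
  | S k' => ser (fun a => pmf a * expK pmf k' (fun t => f (a :: t)))
  end.

Definition sumV (t : list nat) : nat := fold_right Nat.add 0%nat t.

(* number of draws pV (an integer by hypothesis; floor taken formally) *)
Definition nDraw (p : R) (t : list nat) : nat :=
  Z.to_nat (Int_part (p * INR (sumV t))).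

Definition binom_pmf (m : nat) (q : R) (n : nat) : R :=
  if Nat.leb n m then C m n * q ^ n * (1 - q) ^ (m - n) else 0.

(* P(tilde v_i = n), i in {1..K}: conditionally on F, tilde v_i is
   Binomial(pV, v_i / V). *)
Definition lawTilde (pmf : nat -> R) (p : R) (K i : nat) (n : nat) : R :=
  expK pmf K (fun t =>
    binom_pmf (nDraw p t) (INR (nth (i - 1) t 0%nat) / INR (sumV t)) n).

Definition Qdist (pmf : nat -> R) (p : R) (j : nat) : R :=
  ser (fun a => pmf a * ((p * INR a) ^ j / INR (Factorial.fact j) * exp (- (p * INR a)))).

Definition tv (mu nu : nat -> R) : R :=
  / 2 * ser (fun n => Rabs (mu n - nu n)).

Definition rhsBound (pmf : nat -> R) (p : R) (K : nat) : R :=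
  expK pmf K (fun t =>
    Rmin (p * INR (nth 0 t 0%nat)) 1 * (INR (nth 0 t 0%nat) / INR (sumV t))).

(* Main.v *)
Require Import Defs.
From Stdlib Require Import Reals List ClassicalEpsilon Arith Lra Lia FunctionalExtensionality ZArith.
Open Scope R_scope.

Lemma ser_eq f l : infinite_sum f l -> ser f = l.
Proof.
  intro H. unfold ser. apply (uniqueness_sum f).
  - apply epsilon_spec. exists l; exact H.
  - exact H.
Qed.

Lemma cv_const c : Un_cv (fun _ => c) c.
Proof. intros e He. exists 0%nat. intros. unfold Rdist. rewrite Rminus_diag, Rabs_R0. lra. Qed.

Lemma isum_plus f g a b : infinite_sum f a -> infinite_sum g b ->
  infinite_sum (fun n => f n + g n) (a + b).
Proof.
  intros Hf Hg. assert (H := CV_plus _ _ _ _ Hf Hg).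
  intros e He. destruct (H e He) as [N HN]. exists N. intros n Hn.
  rewrite sum_plus. apply HN; auto.
Qed.

Lemma isum_scal f a c : infinite_sum f a -> infinite_sum (fun n => c * f n) (c * a).
Proof.
  intros Hf. assert (H := CV_mult _ _ _ _ (cv_const c) Hf).
  intros e He. destruct (H e He) as [N HN]. exists N. intros n Hn.
  replace (sum_f_R0 (fun n0 => c * f n0) n) with (c * sum_f_R0 f n).
  - apply HN; auto.
  - rewrite scal_sum. apply sum_eq. intros; ring.
Qed.

Lemma isum_le f g a b : (forall n, f n <= g n) -> infinite_sum f a -> infinite_sum g b -> a <= b.
Proof.
  intros H Hf Hg. apply (Rle_cv_lim (Un:=sum_f_R0 f) (Vn:=sum_f_R0 g)); auto.
  intro n. apply sum_Rle. intros; auto.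
Qed.

Lemma isum_ext f g a : (forall n, f n = g n) -> infinite_sum f a -> infinite_sum g a.
Proof.
  intros H Hf e He. destruct (Hf e He) as [N HN]. exists N. intros n Hn.
  rewrite <- (sum_eq f g n). apply HN; auto. intros; auto.
Qed.

Lemma summable_w (w g : nat -> R) S M :
  (forall n, 0 <= w n) -> infinite_sum w S -> (forall n, Rabs (g n) <= M) ->
  exists l, infinite_sum (fun n => w n * g n) l.
Proof.
  intros Hw HS Hg.
  assert (HM : 0 <= M) by (specialize (Hg 0%nat); pose proof (Rabs_pos (g 0%nat)); lra).
  assert (C1 : {l | Un_cv (fun N => sum_f_R0 (fun n => Rabs (w n * g n)) N) l}).
  { apply (Rseries_CV_comp _ (fun n => M * w n)).
    - intro n. split. apply Rabs_pos. rewrite Rabs_mult, (Rabs_right (w n)) by (apply Rle_ge; auto).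
      rewrite Rmult_comm. apply Rmult_le_compat_r; auto.
    - exists (M * S). apply isum_scal. exact HS. }
  apply cv_cauchy_1 in C1. apply cauchy_abs in C1. apply cv_cauchy_2 in C1.
  destruct C1 as [l Hl]. exists l. exact Hl.
Qed.

Lemma Rabs_le_inv x M : Rabs x <= M -> -M <= x <= M.
Proof. unfold Rabs. destruct (Rcase_abs x); intros; lra. Qed.

Definition Bnd (f : list nat -> R) := exists M, forall t, Rabs (f t) <= M.

Lemma Bnd_cons f a : Bnd f -> Bnd (fun t => f (a :: t)).
Proof. intros [M HM]. exists M. intro t. apply HM. Qed.

Lemma isum_bound (w g : nat -> R) l M : (forall n, 0 <= w n) -> infinite_sum w 1 ->
  (forall n, Rabs (g n) <= M) -> infinite_sum (fun n => w n * g n) l -> Rabs l <= M.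
Proof.
  intros Hw H1 Hg Hl. apply Rabs_le. split.
  - replace (-M) with (-M * 1) by ring.
    apply (isum_le (fun n => -M * w n) (fun n => w n * g n)); auto.
    + intro n. specialize (Hg n). apply Rabs_le_inv in Hg.
      pose proof (Hw n). nra.
    + apply isum_scal; auto.
  - replace M with (M * 1) by ring.
    apply (isum_le (fun n => w n * g n) (fun n => M * w n)); auto.
    + intro n. specialize (Hg n). apply Rabs_le_inv in Hg.
      pose proof (Hw n). nra.
    + apply isum_scal; auto.
Qed.

Lemma expK_bound pmf (Hn : forall n, 0 <= pmf n) (Hs : infinite_sum pmf 1) k :
  forall f M, (forall t, Rabs (f t) <= M) -> Rabs (expK pmf k f) <= M.
Proof.
  induction k as [|k IH]; intros f M HM; simpl.
  - apply HM.
  - assert (Hin : forall a, Rabs (expK pmf k (fun t => f (a :: t))) <= M).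
    { intro a. apply IH. intro; apply HM. }
    destruct (summable_w pmf _ 1 M Hn Hs Hin) as [l Hl].
    rewrite (ser_eq _ _ Hl). exact (isum_bound pmf _ l M Hn Hs Hin Hl).
Qed.

Lemma expK_isum pmf (Hn : forall n, 0 <= pmf n) (Hs : infinite_sum pmf 1) k f :
  Bnd f -> infinite_sum (fun a => pmf a * expK pmf k (fun t => f (a :: t))) (expK pmf (S k) f).
Proof.
  intros [M HM].
  assert (Hin : forall a, Rabs (expK pmf k (fun t => f (a :: t))) <= M).
  { intro a. apply (expK_bound pmf Hn Hs). intro; apply HM. }
  destruct (summable_w pmf _ 1 M Hn Hs Hin) as [l Hl].
  simpl. rewrite (ser_eq _ _ Hl). exact Hl.
Qed.

Lemma Bnd_plus f g : Bnd f -> Bnd g -> Bnd (fun t => f t + g t).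
Proof.
  intros [M HM] [N HN]. exists (M + N). intro t.
  eapply Rle_trans. apply Rabs_triang. specialize (HM t); specialize (HN t); lra.
Qed.

Lemma Bnd_scal c f : Bnd f -> Bnd (fun t => c * f t).
Proof.
  intros [M HM]. exists (Rabs c * M). intro t. rewrite Rabs_mult.
  apply Rmult_le_compat_l. apply Rabs_pos. apply HM.
Qed.

Lemma expK_plus pmf (Hn : forall n, 0 <= pmf n) (Hs : infinite_sum pmf 1) k :
  forall f g, Bnd f -> Bnd g -> expK pmf k (fun t => f t + g t) = expK pmf k f + expK pmf k g.
Proof.
  induction k as [|k IH]; intros f g Hf Hg.
  - reflexivity.
  - assert (H1 := expK_isum pmf Hn Hs k f Hf).
    assert (H2 := expK_isum pmf Hn Hs k g Hg).
    assert (H3 := isum_plus _ _ _ _ H1 H2).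
    simpl. apply ser_eq. eapply isum_ext; [|exact H3].
    intro a. simpl. rewrite (IH (fun t => f (a :: t)) (fun t => g (a :: t))).
    ring. apply Bnd_cons; auto. apply Bnd_cons; auto.
Qed.

Lemma expK_scal pmf (Hn : forall n, 0 <= pmf n) (Hs : infinite_sum pmf 1) k :
  forall c f, Bnd f -> expK pmf k (fun t => c * f t) = c * expK pmf k f.
Proof.
  induction k as [|k IH]; intros c f Hf.
  - reflexivity.
  - assert (H1 := expK_isum pmf Hn Hs k f Hf).
    assert (H3 := isum_scal _ _ c H1).
    simpl. apply ser_eq. eapply isum_ext; [|exact H3].
    intro a. simpl. rewrite (IH c (fun t => f (a :: t))). ring. apply Bnd_cons; auto.
Qed.

Lemma expK_const pmf (Hn : forall n, 0 <= pmf n) (Hs : infinite_sum pmf 1) k c :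
  expK pmf k (fun _ => c) = c.
Proof.
  induction k as [|k IH].
  - reflexivity.
  - simpl. apply ser_eq. assert (H := isum_scal _ _ c Hs). rewrite Rmult_1_r in H.
    eapply isum_ext; [|exact H].
    intro a. simpl. rewrite IH. ring.
Qed.

Definition supp pmf k (t : list nat) := length t = k /\ (forall x, In x t -> 0 < pmf x).

Lemma expK_mono pmf (Hn : forall n, 0 <= pmf n) (Hs : infinite_sum pmf 1) k :
  forall f g, Bnd f -> Bnd g -> (forall t, supp pmf k t -> f t <= g t) ->
  expK pmf k f <= expK pmf k g.
Proof.
  induction k as [|k IH]; intros f g Hf Hg H.
  - simpl. apply H. split; simpl; auto. intros x [].
  - assert (H1 := expK_isum pmf Hn Hs k f Hf).
    assert (H2 := expK_isum pmf Hn Hs k g Hg).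
    eapply isum_le; [|exact H1|exact H2].
    intro a. destruct (Hn a) as [Hp|Hp].
    + apply Rmult_le_compat_l; [lra|]. apply IH; try apply Bnd_cons; auto.
      intros t [Hl Ht]. apply H. split. simpl; lia.
      intros x [<-|Hx]; auto.
    + rewrite <- Hp. lra.
Qed.

Lemma expK_ext pmf (Hn : forall n, 0 <= pmf n) (Hs : infinite_sum pmf 1) k f g :
  Bnd f -> Bnd g -> (forall t, supp pmf k t -> f t = g t) -> expK pmf k f = expK pmf k g.
Proof.
  intros Hf Hg H. apply Rle_antisym; apply expK_mono; auto;
  intros t Ht; rewrite (H t Ht); lra.
Qed.

Lemma expK_opp pmf (Hn : forall n, 0 <= pmf n) (Hs : infinite_sum pmf 1) k f :
  Bnd f -> expK pmf k (fun t => - f t) = - expK pmf k f.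
Proof.
  intro Hf. transitivity (expK pmf k (fun t => -1 * f t)).
  - apply expK_ext; auto.
    + destruct Hf as [M HM]. exists M. intro t. rewrite Rabs_Ropp. auto.
    + apply Bnd_scal; auto.
    + intros; ring.
  - rewrite expK_scal; auto. ring.
Qed.

Lemma ser_ext f g : (forall n, f n = g n) -> ser f = ser g.
Proof. intro H. f_equal. extensionality n. auto. Qed.

Lemma ser_wconst pmf (Hs : infinite_sum pmf 1) c : ser (fun a => pmf a * c) = c.
Proof.
  apply ser_eq. assert (H := isum_scal _ _ c Hs). rewrite Rmult_1_r in H.
  eapply isum_ext; [|exact H]. intro; simpl; ring.
Qed.

Lemma expK_marg pmf (Hn : forall n, 0 <= pmf n) (Hs : infinite_sum pmf 1) (g : nat -> R) M :
  (forall a, Rabs (g a) <= M) ->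
  forall k j, (j < k)%nat -> expK pmf k (fun t => g (nth j t 0%nat)) = ser (fun a => pmf a * g a).
Proof.
  intros HM k. induction k as [|k IH]; intros j Hj; [lia|].
  destruct j as [|j].
  - simpl. apply ser_ext. intro a. rewrite expK_const; auto.
  - simpl. transitivity (ser (fun a => pmf a * ser (fun a0 => pmf a0 * g a0))).
    + apply ser_ext. intro a. rewrite (IH j); auto. lia.
    + apply ser_wconst; auto.
Qed.

Lemma le_eps x y : (forall e, 0 < e -> x <= y + e) -> x <= y.
Proof.
  intro H. destruct (Rle_dec x y) as [|Hn]; auto.
  specialize (H ((x - y)/2)). lra.
Qed.

Lemma psum_le_lim w l : (forall n, 0 <= w n) -> infinite_sum w l -> forall n, sum_f_R0 w n <= l.
Proof.
  intros Hw Hl n. apply growing_ineq; auto.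
  intro m. rewrite tech5. specialize (Hw (S m)). lra.
Qed.

Lemma psum_nonneg w : (forall n, 0 <= w n) -> forall n, 0 <= sum_f_R0 w n.
Proof. intros Hw n. induction n; simpl; auto. specialize (Hw (S n)); lra. Qed.

Lemma fin_tail (w g : nat -> R) M N d : (forall n, 0 <= w n) -> (forall n, Rabs (g n) <= M) ->
  Rabs (sum_f_R0 (fun b => w b * g b) (N + d) - sum_f_R0 (fun b => w b * g b) N)
  <= M * (sum_f_R0 w (N + d) - sum_f_R0 w N).
Proof.
  intros Hw Hg. induction d as [|d IH].
  - rewrite Nat.add_0_r. rewrite !Rminus_diag, Rabs_R0. lra.
  - rewrite Nat.add_succ_r, !tech5.
    replace (sum_f_R0 (fun b => w b * g b) (N + d) + w (S (N + d)) * g (S (N + d)) -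
      sum_f_R0 (fun b => w b * g b) N) with
      ((sum_f_R0 (fun b => w b * g b) (N + d) - sum_f_R0 (fun b => w b * g b) N) +
       w (S (N + d)) * g (S (N + d))) by ring.
    eapply Rle_trans. apply Rabs_triang.
    rewrite Rabs_mult, (Rabs_right (w _)) by (apply Rle_ge; auto).
    specialize (Hg (S (N + d))). specialize (Hw (S (N + d))).
    assert (w (S (N + d)) * Rabs (g (S (N + d))) <= w (S (N + d)) * M) by (apply Rmult_le_compat_l; auto).
    nra.
Qed.

Lemma tail_bound (w g : nat -> R) M l N : (forall n, 0 <= w n) -> infinite_sum w 1 ->
  (forall n, Rabs (g n) <= M) -> infinite_sum (fun b => w b * g b) l ->
  Rabs (l - sum_f_R0 (fun b => w b * g b) N) <= M * (1 - sum_f_R0 w N).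
Proof.
  intros Hw H1 Hg Hl.
  assert (HM : 0 <= M) by (specialize (Hg 0%nat); pose proof (Rabs_pos (g 0%nat)); lra).
  apply le_eps. intros e He.
  destruct (Hl (e/2)) as [N1 HN1]; [lra|].
  destruct (H1 (e/(2*(M+1)))) as [N2 HN2].
  { apply Rlt_gt. apply Rdiv_lt_0_compat; lra. }
  set (n := (N + N1 + N2)%nat).
  specialize (HN1 n ltac:(unfold n; lia)). specialize (HN2 n ltac:(unfold n; lia)).
  unfold Rdist in *.
  assert (Ht := fin_tail w g M N (N1 + N2) Hw Hg).
  replace (N + (N1 + N2))%nat with n in Ht by (unfold n; lia).
  apply Rabs_def2 in HN2.
  assert (M * (sum_f_R0 w n - 1) <= M * (e / (2 * (M + 1)))).
  { apply Rmult_le_compat_l; lra. }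
  assert (M * (e / (2 * (M + 1))) <= e/2).
  { unfold Rdiv. rewrite Rinv_mult. 
    assert (M * / (M+1) <= 1).
    { apply (Rmult_le_reg_r (M+1)); [lra|]. rewrite Rmult_assoc, Rinv_l by lra. lra. }
    assert (0 < /2) by lra. assert (0 < e) by lra.
    replace (M * (e * (/ 2 * / (M + 1)))) with ((M * / (M + 1)) * (e * /2)) by ring.
    nra. }
  replace (l - sum_f_R0 (fun b => w b * g b) N) with
    ((l - sum_f_R0 (fun b => w b * g b) n) + (sum_f_R0 (fun b => w b * g b) n - sum_f_R0 (fun b => w b * g b) N)) by ring.
  eapply Rle_trans. apply Rabs_triang. rewrite Rabs_minus_sym in HN1. nra.
Qed.

Lemma sum_swap (f : nat -> nat -> R) M N :
  sum_f_R0 (fun a => sum_f_R0 (fun b => f a b) M) N = sum_f_R0 (fun b => sum_f_R0 (fun a => f a b) N) M.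
Proof.
  induction N as [|N IH]; simpl.
  - reflexivity.
  - rewrite IH. rewrite <- sum_plus. reflexivity.
Qed.

Lemma dbl_cv pmf (Hn : forall n, 0 <= pmf n) (Hs : infinite_sum pmf 1) (G : nat -> nat -> R) M :
  (forall a b, Rabs (G a b) <= M) ->
  Un_cv (fun N => sum_f_R0 (fun a => pmf a * sum_f_R0 (fun b => pmf b * G a b) N) N)
        (ser (fun a => pmf a * ser (fun b => pmf b * G a b))).
Proof.
  intros HG.
  assert (HM : 0 <= M) by (specialize (HG 0%nat 0%nat); pose proof (Rabs_pos (G 0%nat 0%nat)); lra).
  set (F := fun a => ser (fun b => pmf b * G a b)).
  assert (HF : forall a, infinite_sum (fun b => pmf b * G a b) (F a)).
  { intro a. destruct (summable_w pmf (G a) 1 M Hn Hs (HG a)) as [l Hl].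
    unfold F. rewrite (ser_eq _ _ Hl). exact Hl. }
  assert (HFb : forall a, Rabs (F a) <= M).
  { intro a. apply (isum_bound pmf (G a) (F a) M Hn Hs (HG a) (HF a)). }
  destruct (summable_w pmf F 1 M Hn Hs HFb) as [S HS].
  change (Un_cv (fun N => sum_f_R0 (fun a => pmf a * sum_f_R0 (fun b => pmf b * G a b) N) N) (ser (fun a => pmf a * F a))). rewrite (ser_eq _ _ HS).
  intros e He.
  destruct (HS (e/2)) as [N1 HN1]; [lra|].
  destruct (Hs (e/(2*(M+1)))) as [N2 HN2].
  { apply Rlt_gt. apply Rdiv_lt_0_compat; lra. }
  exists (N1 + N2)%nat. intros n Hnn.
  specialize (HN1 n ltac:(lia)). specialize (HN2 n ltac:(lia)).
  unfold Rdist in *. apply Rabs_def2 in HN2.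
  assert (Hsn : sum_f_R0 pmf n <= 1) by (apply psum_le_lim; auto).
  assert (Hsn0 : 0 <= sum_f_R0 pmf n) by (apply psum_nonneg; auto).
  assert (Hdiff : Rabs (sum_f_R0 (fun a => pmf a * F a) n -
                        sum_f_R0 (fun a => pmf a * sum_f_R0 (fun b => pmf b * G a b) n) n)
                  <= M * (1 - sum_f_R0 pmf n)).
  { rewrite <- minus_sum. eapply Rle_trans. apply Rsum_abs.
    eapply Rle_trans with (sum_f_R0 (fun a => pmf a * (M * (1 - sum_f_R0 pmf n))) n).
    - apply sum_Rle. intros a _.
      replace (pmf a * F a - pmf a * sum_f_R0 (fun b => pmf b * G a b) n)
        with (pmf a * (F a - sum_f_R0 (fun b => pmf b * G a b) n)) by ring.
      rewrite Rabs_mult, (Rabs_right (pmf a)) by (apply Rle_ge; auto).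
      apply Rmult_le_compat_l; auto.
      apply (tail_bound pmf (G a) M (F a) n Hn Hs (HG a) (HF a)).
    - rewrite <- scal_sum. rewrite Rmult_comm.
      assert (0 <= M * (1 - sum_f_R0 pmf n)) by (apply Rmult_le_pos; lra). nra. }
  assert (M * (1 - sum_f_R0 pmf n) <= M * (e / (2 * (M + 1)))).
  { apply Rmult_le_compat_l; lra. }
  assert (M * (e / (2 * (M + 1))) <= e/2).
  { unfold Rdiv. rewrite Rinv_mult.
    assert (M * / (M+1) <= 1).
    { apply (Rmult_le_reg_r (M+1)); [lra|]. rewrite Rmult_assoc, Rinv_l by lra. lra. }
    assert (0 < e) by lra.
    replace (M * (e * (/ 2 * / (M + 1)))) with ((M * / (M + 1)) * (e * /2)) by ring.
    nra. }
  match goal with |- Rabs (?D - _) < _ =>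
    replace (D - S) with ((D - sum_f_R0 (fun a => pmf a * F a) n) + (sum_f_R0 (fun a => pmf a * F a) n - S)) by ring end.
  eapply Rle_lt_trans. apply Rabs_triang. rewrite Rabs_minus_sym in Hdiff. lra.
Qed.

Lemma fubini pmf (Hn : forall n, 0 <= pmf n) (Hs : infinite_sum pmf 1) (G : nat -> nat -> R) M :
  (forall a b, Rabs (G a b) <= M) ->
  ser (fun a => pmf a * ser (fun b => pmf b * G a b)) =
  ser (fun b => pmf b * ser (fun a => pmf a * G a b)).
Proof.
  intros HG.
  assert (H1 := dbl_cv pmf Hn Hs G M HG).
  assert (H2 := dbl_cv pmf Hn Hs (fun b a => G a b) M (fun b a => HG a b)).
  eapply UL_sequence; [exact H1|].
  intros e He. destruct (H2 e He) as [N HN]. exists N. intros n Hnn.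
  specialize (HN n Hnn).
  replace (sum_f_R0 (fun a => pmf a * sum_f_R0 (fun b => pmf b * G a b) n) n) with
    (sum_f_R0 (fun b => pmf b * sum_f_R0 (fun a => pmf a * G a b) n) n); auto.
  transitivity (sum_f_R0 (fun b => sum_f_R0 (fun a => pmf b * pmf a * G a b) n) n).
  - apply sum_eq. intros b _. rewrite scal_sum. apply sum_eq. intros; ring.
  - rewrite sum_swap. apply sum_eq. intros a _. rewrite scal_sum. apply sum_eq. intros; ring.
Qed.

Fixpoint swapAt (j : nat) (t : list nat) : list nat :=
  match j, t with
  | O, a :: b :: r => b :: a :: r
  | S j', a :: r => a :: swapAt j' r
  | _, _ => t
  end.

Lemma Bnd_comp f (s : list nat -> list nat) : Bnd f -> Bnd (fun t => f (s t)).
Proof. intros [M HM]. exists M. intro; apply HM. Qed.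

Lemma expK_swap pmf (Hn : forall n, 0 <= pmf n) (Hs : infinite_sum pmf 1) j :
  forall k f, Bnd f -> expK pmf k f = expK pmf k (fun t => f (swapAt j t)).
Proof.
  induction j as [|j IH]; intros k f Hf.
  - destruct k as [|[|k]].
    + reflexivity.
    + reflexivity.
    + destruct Hf as [M HM].
      change (ser (fun a => pmf a * ser (fun b => pmf b * expK pmf k (fun t => f (a :: b :: t)))) =
              ser (fun a => pmf a * ser (fun b => pmf b * expK pmf k (fun t => f (b :: a :: t))))).
      rewrite (fubini pmf Hn Hs (fun a b => expK pmf k (fun t => f (a :: b :: t))) M).
      * reflexivity.
      * intros a b. apply (expK_bound pmf Hn Hs). intro; apply HM.
  - destruct k as [|k].
    + reflexivity.
    + simpl. apply ser_ext. intro a. f_equal.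
      apply (IH k (fun t => f (a :: t))). apply Bnd_cons; auto.
Qed.

Lemma sumV_swap j t : sumV (swapAt j t) = sumV t.
Proof.
  revert t; induction j as [|j IH]; intros t.
  - destruct t as [|a [|b r]]; simpl; auto; unfold sumV; simpl; lia.
  - destruct t as [|a r]; simpl; auto.
Qed.

Lemma nth_swap j t : (S j < length t)%nat -> nth (S j) (swapAt j t) 0%nat = nth j t 0%nat.
Proof.
  revert t; induction j as [|j IH]; intros t Ht.
  - destruct t as [|a [|b r]]; simpl in *; auto; lia.
  - destruct t as [|a r]; simpl in *; [lia|]. apply IH. lia.
Qed.

Lemma expK_move pmf (Hn : forall n, 0 <= pmf n) (Hs : infinite_sum pmf 1) (h : nat -> nat -> R) M k :
  (forall a b, Rabs (h a b) <= M) ->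
  forall j, (j < k)%nat ->
  expK pmf k (fun t => h (nth j t 0%nat) (sumV t)) = expK pmf k (fun t => h (nth 0 t 0%nat) (sumV t)).
Proof.
  intros HM j. induction j as [|j IH]; intros Hj; auto.
  assert (Hb : forall g : list nat -> nat, Bnd (fun t => h (g t) (sumV t))).
  { intro g. exists M. intro; apply HM. }
  rewrite (expK_swap pmf Hn Hs j k); [|apply Hb].
  rewrite <- IH by lia. apply expK_ext; auto.
  - apply (Bnd_comp (fun t => h (nth (S j) t 0%nat) (sumV t))). apply Hb.
  - intros t [Hl _]. rewrite sumV_swap, nth_swap; auto. lia.
Qed.

Definition pz (l : R) (n : nat) : R := l ^ n / INR (Factorial.fact n) * exp (- l).
Definition PP (l : R) (k : nat) : R := sum_f_R0 (pz l) k.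

Lemma pz_pos l n : 0 < l -> 0 < pz l n.
Proof.
  intro Hl. unfold pz. apply Rmult_lt_0_compat; [|apply exp_pos].
  apply Rdiv_lt_0_compat. apply pow_lt; auto. apply INR_fact_lt_0.
Qed.

Lemma pz_nonneg l n : 0 <= l -> 0 <= pz l n.
Proof.
  intro Hl. unfold pz. apply Rmult_le_pos; [|left; apply exp_pos].
  unfold Rdiv. apply Rmult_le_pos. apply pow_le; auto. left; apply Rinv_0_lt_compat, INR_fact_lt_0.
Qed.

Lemma pz_rec l n : pz l (S n) = l / INR (S n) * pz l n.
Proof.
  unfold pz. rewrite fact_simpl, mult_INR. simpl pow.
  assert (INR (S n) <> 0) by (apply not_0_INR; lia).
  assert (INR (Factorial.fact n) <> 0) by apply INR_fact_neq_0.
  field. auto.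
Qed.

Lemma pz_0 l : pz l 0 = exp (- l).
Proof. unfold pz. simpl. field. Qed.

Lemma pz_isum l : infinite_sum (pz l) 1.
Proof.
  destruct (exist_exp l) as [e He] eqn:Hee.
  assert (Hexp : exp l = e) by (unfold exp; rewrite Hee; reflexivity).
  unfold exp_in in He.
  assert (H := isum_scal _ _ (exp (- l)) He).
  rewrite <- Hexp, <- exp_plus in H. replace (- l + l) with 0 in H by ring. rewrite exp_0 in H.
  eapply isum_ext; [|exact H]. intro n. unfold pz. unfold Rdiv. ring.
Qed.

Lemma PP_le1 l k : 0 <= l -> PP l k <= 1.
Proof. intro Hl. apply psum_le_lim; [intro; apply pz_nonneg; auto| apply pz_isum]. Qed.

Lemma pz_le1 l n : 0 <= l -> pz l n <= 1.
Proof.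
  intro Hl. eapply Rle_trans; [|apply (PP_le1 l n Hl)]. unfold PP.
  destruct n. simpl; lra. rewrite tech5.
  pose proof (psum_nonneg (pz l) (fun k => pz_nonneg l k Hl) n). lra.
Qed.

Lemma PP_S l k : PP l (S k) = PP l k + pz l (S k).
Proof. unfold PP. apply tech5. Qed.

Lemma tail_inv l j (Hl : 0 < l) (Hj : l < INR j + 1) d :
  PP l (j + d) - PP l j + (l / (INR j + 1 - l)) * pz l (j + d) <= (l / (INR j + 1 - l)) * pz l j.
Proof.
  set (c := l / (INR j + 1 - l)).
  assert (Hc : 0 < c) by (unfold c; apply Rdiv_lt_0_compat; lra).
  induction d as [|d IH].
  - rewrite Nat.add_0_r. lra.
  - rewrite Nat.add_succ_r, PP_S, pz_rec.
    assert (Hp := pz_pos l (j + d) Hl).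
    assert (H1 : l / INR (S (j + d)) <= l / (INR j + 1)).
    { unfold Rdiv. apply Rmult_le_compat_l; [lra|]. apply Rinv_le_contravar.
      pose proof (pos_INR j); lra. rewrite S_INR, plus_INR. pose proof (pos_INR d). lra. }
    assert (H2 : (1 + c) * (l / (INR j + 1)) = c).
    { unfold c. field. split; lra. }
    assert (H3 : 0 <= l / INR (S (j + d))) by (unfold Rdiv; apply Rmult_le_pos; [lra|left; apply Rinv_0_lt_compat, lt_0_INR; lia]).
    assert ((1 + c) * (l / INR (S (j + d)) * pz l (j + d)) <= c * pz l (j + d)).
    { rewrite <- H2 at 2. rewrite <- Rmult_assoc. apply Rmult_le_compat_r; [lra|].
      apply Rmult_le_compat_l; lra. }
    lra.
Qed.

Lemma tail_bound_pz l j (Hl : 0 < l) (Hj : l < INR j + 1) :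
  1 - PP l j <= (l / (INR j + 1 - l)) * pz l j.
Proof.
  assert (H : forall N, PP l N <= PP l j + (l / (INR j + 1 - l)) * pz l j).
  { intro N. assert (Hc : 0 < l / (INR j + 1 - l)) by (apply Rdiv_lt_0_compat; lra).
    assert (Hp := pz_pos l j Hl).
    destruct (le_lt_dec N j) as [HN|HN].
    - assert (PP l N <= PP l j).
      { replace j with (N + (j - N))%nat by lia. clear HN. induction (j - N)%nat as [|d IH].
        rewrite Nat.add_0_r; lra. rewrite Nat.add_succ_r, PP_S. pose proof (pz_pos l (S (N + d)) Hl). lra. }
      nra.
    - replace N with (j + (N - j))%nat by lia.
      pose proof (tail_inv l j Hl Hj (N - j)). pose proof (pz_pos l (j + (N - j)) Hl).
      assert (0 < l / (INR j + 1 - l) * pz l (j + (N - j))) by (apply Rmult_lt_0_compat; auto). lra. }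
  assert (1 <= PP l j + l / (INR j + 1 - l) * pz l j).
  { apply (Rle_cv_lim (Un:=PP l) (Vn:=fun _ => PP l j + l / (INR j + 1 - l) * pz l j)); auto.
    apply pz_isum. apply cv_const. }
  lra.
Qed.

Definition gi (l : R) (i k : nat) : R :=
  match k with
  | O => 0
  | S k' => if Nat.leb i k' then pz l i * (1 - PP l k') / (l * pz l k')
            else - (pz l i * PP l k') / (l * pz l k')
  end.

Lemma stein_gi l i k (Hl : 0 < l) :
  l * gi l i (S k) - INR k * gi l i k = (if Nat.eqb k i then 1 else 0) - pz l i.
Proof.
  assert (Hpk := pz_pos l k Hl).
  destruct k as [|k].
  - simpl gi. rewrite Rmult_0_l, Rminus_0_r.
    destruct i as [|i]; simpl.
    + unfold PP. simpl. field. lra.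
    + unfold PP. simpl. field. lra.
  - assert (Hpk' := pz_pos l k Hl).
    assert (HSk : INR (S k) <> 0) by (apply not_0_INR; lia).
    assert (Hr := pz_rec l k).
    unfold gi. rewrite PP_S.
    destruct (Nat.leb i (S k)) eqn:E1; destruct (Nat.leb i k) eqn:E2;
    destruct (Nat.eqb (S k) i) eqn:E3;
    apply Nat.leb_le in E1 || apply Nat.leb_gt in E1;
    apply Nat.leb_le in E2 || apply Nat.leb_gt in E2;
    apply Nat.eqb_eq in E3 || apply Nat.eqb_neq in E3; try lia.
    + rewrite Hr. field. repeat split; lra.
    + subst i. rewrite Hr. field. repeat split; lra.
    + rewrite Hr. field. repeat split; lra.
Qed.

Lemma X_mono l (Hl : 0 < l) : forall k, PP l k / pz l k <= PP l (S k) / pz l (S k).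
Proof.
  set (X := fun k => PP l k / pz l k).
  assert (Hrec : forall k, X (S k) = 1 + INR (S k) / l * X k).
  { intro k. unfold X. rewrite PP_S, pz_rec. assert (Hp := pz_pos l k Hl).
    assert (INR (S k) <> 0) by (apply not_0_INR; lia). field. repeat split; lra. }
  assert (Hpos : forall k, 0 <= X k).
  { intro k. unfold X. unfold Rdiv. apply Rmult_le_pos.
    apply psum_nonneg. intro; apply pz_nonneg; lra. left; apply Rinv_0_lt_compat, pz_pos; auto. }
  assert (H0 : X 0%nat = 1) by (unfold X, PP; simpl; field; apply Rgt_not_eq, pz_pos; auto).
  intro k. change (X k <= X (S k)). induction k as [|k IH].
  - rewrite Hrec, H0. assert (0 < INR 1 / l * 1).
    { rewrite Rmult_1_r. apply Rdiv_lt_0_compat; auto. simpl; lra. } lra.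
  - rewrite (Hrec (S k)). assert (E := Hrec k).
    assert (INR (S (S k)) / l * X (S k) >= INR (S k) / l * X k).
    { apply Rle_ge. unfold Rdiv. rewrite S_INR with (n := S k).
      assert (0 <= / l) by (left; apply Rinv_0_lt_compat; auto).
      assert (0 <= INR (S k)) by apply pos_INR.
      pose proof (Hpos (S k)).
      assert (INR (S k) * X k <= INR (S k) * X (S k)) by (apply Rmult_le_compat_l; auto).
      nra. }
    lra.
Qed.

Lemma T_mono l (Hl : 0 < l) : forall k, (1 - PP l (S k)) / pz l (S k) <= (1 - PP l k) / pz l k.
Proof.
  intro k. set (j := S k).
  assert (Hp := pz_pos l k Hl). assert (Hpj := pz_pos l j Hl).
  assert (Hu : 0 <= 1 - PP l j) by (pose proof (PP_le1 l j); lra).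
  assert (Hrj : pz l j = l / INR j * pz l k) by apply pz_rec.
  assert (HPj : PP l j = PP l k + pz l j) by apply PP_S.
  assert (Hj : 0 < INR j) by (apply lt_0_INR; unfold j; lia).
  assert (Key : (1 - PP l j) * (INR j - l) <= l * pz l j).
  { destruct (Rle_dec (INR j) l) as [Hle|Hgt].
    - assert (0 <= l * pz l j) by (apply Rmult_le_pos; lra). nra.
    - assert (HT := tail_bound_pz l j Hl ltac:(lra)).
      assert ((1 - PP l j) * (INR j - l) <= l / (INR j + 1 - l) * pz l j * (INR j - l)).
      { apply Rmult_le_compat_r; lra. }
      assert (l / (INR j + 1 - l) * pz l j * (INR j - l) <= l * pz l j).
      { replace (l / (INR j + 1 - l) * pz l j * (INR j - l)) with
          ((l * pz l j) * ((INR j - l) / (INR j + 1 - l))) by (field; lra).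
        assert ((INR j - l) / (INR j + 1 - l) <= 1).
        { apply (Rmult_le_reg_r (INR j + 1 - l)); [lra|]. unfold Rdiv.
          rewrite Rmult_assoc, Rinv_l by lra. lra. }
        assert (0 <= l * pz l j) by (apply Rmult_le_pos; lra).
        assert (0 <= (INR j - l) / (INR j + 1 - l)) by (apply Rmult_le_pos; [lra| left; apply Rinv_0_lt_compat; lra]).
        nra. }
      lra. }
  replace (1 - PP l k) with ((1 - PP l j) + pz l j) by lra.
  rewrite Hrj. rewrite Hrj in Key.
  apply (Rmult_le_reg_r (l / INR j * pz l k * pz l k)).
  { apply Rmult_lt_0_compat; auto. apply Rmult_lt_0_compat; auto. apply Rdiv_lt_0_compat; lra. }
  set (u := 1 - PP l j) in *.
  replace (u / (l / INR j * pz l k) * (l / INR j * pz l k * pz l k)) with (u * pz l k) by (field; repeat split; lra).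
  replace ((u + l / INR j * pz l k) / pz l k * (l / INR j * pz l k * pz l k)) with
    ((u + l / INR j * pz l k) * (l / INR j) * pz l k) by (field; repeat split; lra).
  apply Rmult_le_compat_r; [lra|].
  apply (Rmult_le_reg_r (INR j)); auto.
  replace ((u + l / INR j * pz l k) * (l / INR j) * INR j) with (u * l + l * (l / INR j * pz l k)) by (field; lra).
  nra.
Qed.

Lemma dg_ne l i j (Hl : 0 < l) : i <> S j -> gi l i (S (S j)) - gi l i (S j) <= 0.
Proof.
  intro Hij. unfold gi.
  assert (Hp := pz_pos l j Hl). assert (Hp' := pz_pos l (S j) Hl). assert (Hpi := pz_pos l i Hl).
  destruct (Nat.leb i (S j)) eqn:E1; destruct (Nat.leb i j) eqn:E2;
  apply Nat.leb_le in E1 || apply Nat.leb_gt in E1;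
  apply Nat.leb_le in E2 || apply Nat.leb_gt in E2; try lia.
  -
    assert (HT := T_mono l Hl j).
    replace (pz l i * (1 - PP l (S j)) / (l * pz l (S j)) - pz l i * (1 - PP l j) / (l * pz l j))
      with (pz l i / l * ((1 - PP l (S j)) / pz l (S j) - (1 - PP l j) / pz l j)) by (field; repeat split; lra).
    assert (0 < pz l i / l) by (apply Rdiv_lt_0_compat; lra). nra.
  -
    assert (HX := X_mono l Hl j).
    replace (- (pz l i * PP l (S j)) / (l * pz l (S j)) - - (pz l i * PP l j) / (l * pz l j))
      with (pz l i / l * (PP l j / pz l j - PP l (S j) / pz l (S j))) by (field; repeat split; lra).
    assert (0 < pz l i / l) by (apply Rdiv_lt_0_compat; lra). nra.
Qed.

Lemma sum_shift_le l j (Hl : 0 < l) : l * PP l j <= INR (S j) * (PP l (S j) - pz l 0).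
Proof.
  induction j as [|j IH].
  - unfold PP. simpl sum_f_R0. rewrite pz_rec. replace (INR 1) with 1 by reflexivity. right. field.
  - rewrite (PP_S l j). rewrite (PP_S l (S j)).
    assert (Hr : pz l (S (S j)) = l / INR (S (S j)) * pz l (S j)) by apply pz_rec.
    assert (Hp := pz_pos l (S j) Hl).
    assert (H0 : INR (S (S j)) <> 0) by (apply not_0_INR; lia).
    assert (E : INR (S (S j)) * pz l (S (S j)) = l * pz l (S j)) by (rewrite Hr; field; auto).
    assert (Hpp : 0 <= PP l (S j) - pz l 0).
    { unfold PP. rewrite decomp_sum by lia. simpl Init.Nat.pred.
      pose proof (psum_nonneg (fun i => pz l (S i)) (fun i => pz_nonneg l (S i) ltac:(lra)) j). lra. }
    rewrite (S_INR (S j)).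
    replace ((INR (S j) + 1) * (PP l (S j) + pz l (S (S j)) - pz l 0)) with
      (INR (S j) * (PP l (S j) - pz l 0) + (PP l (S j) - pz l 0) + (INR (S (S j)) * pz l (S (S j)))) by (rewrite (S_INR (S j)); ring).
    rewrite E. lra.
Qed.

Lemma dg_eq l j (Hl : 0 < l) : gi l (S j) (S (S j)) - gi l (S j) (S j) <= (1 - exp (- l)) / l.
Proof.
  unfold gi. rewrite Nat.leb_refl.
  replace (Nat.leb (S j) j) with false by (symmetry; apply Nat.leb_gt; lia).
  assert (Hp := pz_pos l j Hl). assert (Hp' := pz_pos l (S j) Hl).
  assert (Hr := pz_rec l j).
  assert (H0 : INR (S j) <> 0) by (apply not_0_INR; lia).
  assert (HSj : 0 < INR (S j)) by (apply lt_0_INR; lia).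
  replace (pz l (S j) * (1 - PP l (S j)) / (l * pz l (S j)) - - (pz l (S j) * PP l j) / (l * pz l j))
    with ((1 - PP l (S j)) / l + PP l j / INR (S j)) by (rewrite Hr; field; repeat split; lra).
  rewrite <- pz_0.
  assert (H := sum_shift_le l j Hl).
  assert (PP l j / INR (S j) <= (PP l (S j) - pz l 0) / l).
  { apply (Rmult_le_reg_r (l * INR (S j))). nra.
    replace (PP l j / INR (S j) * (l * INR (S j))) with (l * PP l j) by (field; lra).
    replace ((PP l (S j) - pz l 0) / l * (l * INR (S j))) with (INR (S j) * (PP l (S j) - pz l 0)) by (field; lra).
    lra. }
  replace ((1 - pz l 0) / l) with ((1 - PP l (S j)) / l + (PP l (S j) - pz l 0) / l) by (field; lra).
  lra.
Qed.

Lemma C_n_0' n : C n 0 = 1.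
Proof. unfold C. rewrite Nat.sub_0_r. simpl. field. apply INR_fact_neq_0. Qed.

Lemma C_n_n' n : C n n = 1.
Proof. unfold C. rewrite Nat.sub_diag. simpl. field. apply INR_fact_neq_0. Qed.

Lemma bin_hi n q k : (n < k)%nat -> binom_pmf n q k = 0.
Proof. intro H. unfold binom_pmf. replace (Nat.leb k n) with false; auto. symmetry; apply Nat.leb_gt; auto. Qed.

Lemma bin_S0 n q : binom_pmf (S n) q 0 = (1 - q) * binom_pmf n q 0.
Proof. unfold binom_pmf. simpl Nat.leb. rewrite !C_n_0'. rewrite !Nat.sub_0_r. simpl. ring. Qed.

Lemma bin_SS n q k : binom_pmf (S n) q (S k) = (1 - q) * binom_pmf n q (S k) + q * binom_pmf n q k.
Proof.
  destruct (lt_eq_lt_dec k n) as [[Hlt|Heq]|Hgt].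
  - unfold binom_pmf.
    replace (Nat.leb (S k) (S n)) with true by (symmetry; apply Nat.leb_le; lia).
    replace (Nat.leb (S k) n) with true by (symmetry; apply Nat.leb_le; lia).
    replace (Nat.leb k n) with true by (symmetry; apply Nat.leb_le; lia).
    rewrite <- pascal by auto.
    replace (S n - S k)%nat with (n - k)%nat by lia.
    replace (n - k)%nat with (S (n - S k)) by lia. simpl. ring.
  - subst k. rewrite (bin_hi n q (S n)) by lia. unfold binom_pmf.
    rewrite !Nat.leb_refl. rewrite !Nat.sub_diag, !C_n_n'. simpl. ring.
  - rewrite !bin_hi by lia. ring.
Qed.

Lemma sum_cl c f n : sum_f_R0 (fun i => c * f i) n = c * sum_f_R0 f n.
Proof. rewrite scal_sum. apply sum_eq. intros; ring. Qed.

Definition Eb (q : R) (n : nat) (F : nat -> R) : R := sum_f_R0 (fun k => binom_pmf n q k * F k) n.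

Lemma Eb_shift q n F : Eb q (S n) F = (1 - q) * Eb q n F + q * Eb q n (fun k => F (S k)).
Proof.
  unfold Eb. rewrite decomp_sum by lia. simpl Init.Nat.pred.
  rewrite bin_S0.
  transitivity ((1 - q) * binom_pmf n q 0 * F 0%nat +
     sum_f_R0 (fun i => (1 - q) * (binom_pmf n q (S i) * F (S i)) + q * (binom_pmf n q i * F (S i))) n).
  - f_equal. apply sum_eq. intros i _. rewrite bin_SS. ring.
  - rewrite sum_plus. rewrite !sum_cl.
    destruct n as [|n].
    + simpl. rewrite (bin_hi 0 q 1) by lia. ring.
    + rewrite (decomp_sum (fun k => binom_pmf (S n) q k * F k) (S n)) by lia. simpl Init.Nat.pred.
      rewrite tech5. rewrite (bin_hi (S n) q (S (S n))) by lia. ring.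
Qed.

Lemma Eb_plus q n F G : Eb q n (fun k => F k + G k) = Eb q n F + Eb q n G.
Proof. unfold Eb. rewrite <- sum_plus. apply sum_eq. intros; ring. Qed.

Lemma Eb_scal q n c F : Eb q n (fun k => c * F k) = c * Eb q n F.
Proof. unfold Eb. rewrite scal_sum. apply sum_eq. intros; ring. Qed.

Lemma Eb_ext q n F G : (forall k, F k = G k) -> Eb q n F = Eb q n G.
Proof. intro H. unfold Eb. apply sum_eq. intros; rewrite H; auto. Qed.

Lemma Eb_one q n : Eb q n (fun _ => 1) = 1.
Proof.
  induction n as [|n IH].
  - unfold Eb, binom_pmf. simpl. rewrite C_n_0'. ring.
  - rewrite Eb_shift. rewrite IH. ring.
Qed.

Lemma Eb_kF q n : forall F, Eb q (S n) (fun k => INR k * F k) = INR (S n) * q * Eb q n (fun k => F (S k)).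
Proof.
  induction n as [|n IH]; intro F.
  - rewrite Eb_shift. unfold Eb, binom_pmf. simpl. rewrite C_n_0'. simpl. ring.
  - rewrite Eb_shift. rewrite IH.
    rewrite (Eb_ext q (S n) (fun k => INR (S k) * F (S k)) (fun k => INR k * F (S k) + F (S k))).
    2:{ intro k. rewrite S_INR. ring. }
    rewrite Eb_plus. rewrite (IH (fun k => F (S k))).
    rewrite (Eb_shift q n (fun k => F (S k))).
    rewrite (S_INR (S n)). ring.
Qed.

Lemma bin_nonneg n q k : 0 <= q <= 1 -> 0 <= binom_pmf n q k.
Proof.
  intro Hq. unfold binom_pmf. destruct (Nat.leb k n); [|lra].
  apply Rmult_le_pos. apply Rmult_le_pos.
  - unfold C. unfold Rdiv. apply Rmult_le_pos. apply pos_INR. left; apply Rinv_0_lt_compat.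
    rewrite <- mult_INR. apply lt_0_INR. pose proof (Factorial.lt_O_fact k). pose proof (Factorial.lt_O_fact (n-k)). lia.
  - apply pow_le; lra.
  - apply pow_le; lra.
Qed.

Lemma Eb_mono q n F G : 0 <= q <= 1 -> (forall k, (k <= n)%nat -> F k <= G k) -> Eb q n F <= Eb q n G.
Proof.
  intros Hq H. unfold Eb. apply sum_Rle. intros k Hk. apply Rmult_le_compat_l. apply bin_nonneg; auto. auto.
Qed.

Lemma bin_le1 n q k : 0 <= q <= 1 -> binom_pmf n q k <= 1.
Proof.
  intro Hq. destruct (le_lt_dec k n) as [Hk|Hk]; [|rewrite bin_hi; auto; lra].
  rewrite <- (Eb_one q n). unfold Eb.
  replace n with (k + (n - k))%nat at 2 by lia.
  assert (forall d, binom_pmf n q k <= sum_f_R0 (fun j => binom_pmf n q j * 1) (k + d)).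
  { induction d as [|d IHd].
    - rewrite Nat.add_0_r. destruct k. simpl. lra. rewrite tech5.
      pose proof (psum_nonneg (fun j => binom_pmf n q j * 1) (fun j => Rmult_le_pos _ _ (bin_nonneg n q j Hq) Rle_0_1) k). lra.
    - rewrite Nat.add_succ_r, tech5. pose proof (bin_nonneg n q (S (k + d)) Hq). lra. }
  apply H.
Qed.

Lemma sum_zero (f : nat -> R) N : (forall i, (i <= N)%nat -> f i = 0) -> sum_f_R0 f N = 0.
Proof.
  induction N as [|N IH]; intro H; simpl. apply H; lia.
  rewrite IH. rewrite H. ring. lia. intros; apply H; lia.
Qed.

Lemma sum_ind_pick (h : nat -> R) m k : (k <= m)%nat ->
  sum_f_R0 (fun i => h i * (if Nat.eqb k i then 1 else 0)) m = h k.
Proof.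
  induction m as [|m IH]; intro Hk.
  - assert (k = 0%nat) by lia. subst. simpl. ring.
  - rewrite tech5. destruct (Nat.eq_dec k (S m)) as [->|Hne].
    + rewrite Nat.eqb_refl.
      assert (sum_f_R0 (fun i => h i * (if Nat.eqb (S m) i then 1 else 0)) m = 0).
      { apply sum_zero. intros i Hi. replace (Nat.eqb (S m) i) with false by (symmetry; apply Nat.eqb_neq; lia). ring. }
      rewrite H. ring.
    + replace (Nat.eqb k (S m)) with false by (symmetry; apply Nat.eqb_neq; auto).
      rewrite IH by lia. ring.
Qed.

Lemma sum_ind_le (c : R) m j : 0 <= c -> sum_f_R0 (fun i => if Nat.eqb i j then c else 0) m <= c.
Proof.
  intro Hc. induction m as [|m IH].
  - destruct j; simpl; lra.
  - rewrite tech5. destruct (Nat.eqb (S m) j) eqn:E.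
    + apply Nat.eqb_eq in E. subst j.
      assert (sum_f_R0 (fun i => if Nat.eqb i (S m) then c else 0) m = 0).
      { apply sum_zero. intros i Hi. replace (Nat.eqb i (S m)) with false by (symmetry; apply Nat.eqb_neq; lia). auto. }
      lra.
    + lra.
Qed.

Lemma sum_zero_tail (f : nat -> R) m N : (m <= N)%nat -> (forall k, (m < k)%nat -> f k = 0) ->
  sum_f_R0 f N = sum_f_R0 f m.
Proof.
  intros HN Hf. replace N with (m + (N - m))%nat by lia. clear HN.
  induction (N - m)%nat as [|d IH]. rewrite Nat.add_0_r; auto.
  rewrite Nat.add_succ_r, tech5, IH, Hf by lia. ring.
Qed.

Lemma sum_le_mono (f : nat -> R) N N' : (forall k, 0 <= f k) -> (N <= N')%nat -> sum_f_R0 f N <= sum_f_R0 f N'.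
Proof.
  intros Hf HN. replace N' with (N + (N' - N))%nat by lia. clear HN.
  induction (N' - N)%nat as [|d IH]. rewrite Nat.add_0_r; lra.
  rewrite Nat.add_succ_r, tech5. specialize (Hf (S (N + d))). lra.
Qed.


Lemma core_stein n q (Hq : 0 < q <= 1) (h : nat -> R) :
  (forall k, 0 <= h k <= 1) ->
  Eb q (S n) h - sum_f_R0 (fun i => h i * pz (INR (S n) * q) i) (S n)
  <= q * (1 - exp (- (INR (S n) * q))).
Proof.
  intros Hh.
  set (m := S n). set (l := INR m * q).
  assert (Hl : 0 < l) by (unfold l, m; apply Rmult_lt_0_compat; [apply lt_0_INR; lia|lra]).
  set (G := fun k => sum_f_R0 (fun i => h i * gi l i k) m).
  set (Ph := sum_f_R0 (fun i => h i * pz l i) m).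
  set (c := (1 - exp (- l)) / l).
  assert (Hc : 0 <= c).
  { unfold c. apply Rmult_le_pos; [|left; apply Rinv_0_lt_compat; auto].
    assert (exp (- l) < 1). { rewrite <- exp_0. apply exp_increasing. lra. } lra. }
  (* Stein equation *)
  assert (HS : forall k, (k <= m)%nat -> l * G (S k) - INR k * G k = h k - Ph).
  { intros k Hk. unfold G, Ph. rewrite <- sum_ind_pick with (h := h) (m := m) by auto.
    rewrite <- !sum_cl, <- !minus_sum. apply sum_eq. intros i _.
    replace (h i * (if Nat.eqb k i then 1 else 0) - h i * pz l i) with (h i * ((if Nat.eqb k i then 1 else 0) - pz l i)) by ring.
    rewrite <- (stein_gi l i k Hl). ring. }
  assert (HB : Eb q m (fun k => l * G (S k) - INR k * G k) = Eb q m h - Ph).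
  { transitivity (Eb q m (fun k => h k - Ph)).
    - unfold Eb. apply sum_eq. intros k Hk. rewrite HS; auto.
    - rewrite (Eb_ext q m (fun k => h k - Ph) (fun k => h k + (- Ph) * 1)) by (intro; ring).
      rewrite Eb_plus, Eb_scal, Eb_one. ring. }
  assert (HC : Eb q m (fun k => l * G (S k) - INR k * G k) =
               l * q * Eb q n (fun k => G (S (S k)) - G (S k))).
  { rewrite (Eb_ext q m _ (fun k => l * G (S k) + (-1) * (INR k * G k))) by (intro; ring).
    rewrite Eb_plus, !Eb_scal. unfold m. rewrite Eb_kF, Eb_shift.
    rewrite (Eb_ext q n (fun k => G (S (S k)) - G (S k)) (fun k => G (S (S k)) + (-1) * G (S k))) by (intro; ring).
    rewrite Eb_plus, Eb_scal. unfold l, m. ring. }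
  assert (HD : forall k, G (S (S k)) - G (S k) <= c * 1).
  { intro k. unfold G. rewrite <- minus_sum.
    eapply Rle_trans; [|rewrite Rmult_1_r; apply (sum_ind_le c m (S k) Hc)].
    apply sum_Rle. intros i _.
    replace (h i * gi l i (S (S k)) - h i * gi l i (S k)) with (h i * (gi l i (S (S k)) - gi l i (S k))) by ring.
    destruct (Nat.eqb i (S k)) eqn:E.
    - apply Nat.eqb_eq in E. subst i. pose proof (dg_eq l k Hl). fold c in H.
      destruct (Hh (S k)). destruct (Rle_dec 0 (gi l (S k) (S (S k)) - gi l (S k) (S k))).
      + nra.
      + nra.
    - apply Nat.eqb_neq in E. pose proof (dg_ne l i k Hl E). destruct (Hh i). nra. }
  assert (HE : Eb q n (fun k => G (S (S k)) - G (S k)) <= c).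
  { apply Rle_trans with (Eb q n (fun _ => c * 1)).
    - apply Eb_mono; [lra|]. intros; apply HD.
    - rewrite Eb_scal, Eb_one. lra. }
  fold m l. fold Ph.
  rewrite <- HB, HC.
  assert (0 <= l * q) by (apply Rmult_le_pos; lra).
  replace (q * (1 - exp (- l))) with (l * q * c) by (unfold c; field; lra).
  apply Rmult_le_compat_l; auto.
Qed.

Lemma core_tv n q N (Hq : 0 < q <= 1) :
  sum_f_R0 (fun k => Rabs (binom_pmf (S n) q k - pz (INR (S n) * q) k)) N
  <= 2 * (Rmin (INR (S n) * q) 1 * q).
Proof.
  set (m := S n). set (l := INR m * q).
  assert (Hl : 0 < l) by (unfold l, m; apply Rmult_lt_0_compat; [apply lt_0_INR; lia|lra]).
  set (b := fun k => binom_pmf m q k).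
  set (h := fun k => if Rlt_dec (pz l k) (b k) then 1 else 0).
  assert (Hh : forall k, 0 <= h k <= 1) by (intro k; unfold h; destruct (Rlt_dec _ _); lra).
  assert (Habs : forall k, Rabs (b k - pz l k) = 2 * ((b k - pz l k) * h k) - (b k - pz l k)).
  { intro k. unfold h. destruct (Rlt_dec (pz l k) (b k)).
    - rewrite Rabs_right by lra. ring.
    - rewrite Rabs_left1 by lra. ring. }
  set (N' := Nat.max N m).
  apply Rle_trans with (sum_f_R0 (fun k => Rabs (b k - pz l k)) N').
  { apply sum_le_mono. intro; apply Rabs_pos. unfold N'; lia. }
  rewrite (sum_eq _ _ N' (fun k _ => Habs k)).
  rewrite minus_sum, sum_cl, minus_sum.
  assert (H1 : sum_f_R0 (fun k => (b k - pz l k) * h k) N' = sum_f_R0 (fun k => (b k - pz l k) * h k) m).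
  { apply sum_zero_tail. unfold N'; lia. intros k Hk.
    assert (b k = 0) by (unfold b; apply bin_hi; auto).
    unfold h. destruct (Rlt_dec _ _) as [Hlt|]; [|ring]. pose proof (pz_pos l k Hl). lra. }
  assert (H2 : sum_f_R0 b N' = 1).
  { rewrite (sum_zero_tail b m N'). 2: unfold N'; lia. 2: intros; unfold b; apply bin_hi; auto.
    rewrite <- (Eb_one q m). unfold Eb. apply sum_eq. intros; unfold b; ring. }
  assert (H3 : sum_f_R0 (pz l) N' <= 1) by (apply PP_le1; lra).
  assert (H4 : sum_f_R0 (fun k => (b k - pz l k) * h k) m
               = Eb q m h - sum_f_R0 (fun i => h i * pz l i) m).
  { unfold Eb. rewrite <- minus_sum. apply sum_eq. intros; unfold b; ring. }
  assert (H5 := core_stein n q Hq h Hh). fold m l in H5.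
  assert (H6 : q * (1 - exp (- l)) <= Rmin l 1 * q).
  { rewrite (Rmult_comm q). apply Rmult_le_compat_r; [lra|].
    assert (0 < exp (- l)) by apply exp_pos. pose proof (exp_ineq1_le (- l)).
    apply Rmin_glb; lra. }
  rewrite H1, H2, H4. lra.
Qed.

Lemma nDraw_int p t m : p * INR (sumV t) = INR m -> nDraw p t = m.
Proof.
  intro H. unfold nDraw. rewrite H. unfold Int_part.
  rewrite <- (up_tech (INR m) (Z.of_nat m)).
  - rewrite Z.add_simpl_r. apply Nat2Z.id.
  - rewrite INR_IZR_INZ. lra.
  - rewrite plus_IZR, <- INR_IZR_INZ. simpl. lra.
Qed.

Lemma nth_le_sumV j t : (nth j t 0 <= sumV t)%nat.
Proof.
  revert t; induction j as [|j IH]; intros [|a t]; simpl; auto; try lia.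
  specialize (IH t). unfold sumV in *. simpl. lia.
Qed.

Lemma ratio_01 a b : (a <= b)%nat -> 0 <= INR a / INR b <= 1.
Proof.
  intro H. destruct b as [|b].
  - assert (a = 0%nat) by lia. subst. simpl. unfold Rdiv. rewrite Rmult_0_l. lra.
  - assert (0 < INR (S b)) by (apply lt_0_INR; lia). apply le_INR in H. split.
    + unfold Rdiv. apply Rmult_le_pos. apply pos_INR. left; apply Rinv_0_lt_compat; auto.
    + apply (Rmult_le_reg_r (INR (S b))); auto. unfold Rdiv. rewrite Rmult_assoc, Rinv_l by lra. lra.
Qed.

Lemma ser_le_of_partial f B : (forall n, 0 <= f n) -> (forall N, sum_f_R0 f N <= B) -> ser f <= B.
Proof.
  intros Hf HB.
  destruct (growing_cv (sum_f_R0 f)) as [l Hl].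
  - intro n. rewrite tech5. specialize (Hf (S n)). lra.
  - exists B. intros x [N ->]. apply HB.
  - assert (Hs : infinite_sum f l) by exact Hl. rewrite (ser_eq _ _ Hs).
    apply (Rle_cv_lim (Un:=sum_f_R0 f) (Vn:=fun _ => B)); auto. apply cv_const.
Qed.

Lemma Bnd_sum (F : nat -> list nat -> R) N : (forall n, Bnd (F n)) -> Bnd (fun t => sum_f_R0 (fun n => F n t) N).
Proof.
  intro H. induction N as [|N IH]; simpl. apply H.
  apply (Bnd_plus (fun t => sum_f_R0 (fun n => F n t) N) (F (S N))); auto.
Qed.

Lemma expK_sum pmf (Hn : forall n, 0 <= pmf n) (Hs : infinite_sum pmf 1) k (F : nat -> list nat -> R) N :
  (forall n, Bnd (F n)) ->
  sum_f_R0 (fun n => expK pmf k (F n)) N = expK pmf k (fun t => sum_f_R0 (fun n => F n t) N).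
Proof.
  intro H. induction N as [|N IH]; simpl. reflexivity.
  rewrite IH. rewrite (expK_plus pmf Hn Hs k (fun t => sum_f_R0 (fun n => F n t) N) (F (S N))); auto.
  apply Bnd_sum; auto.
Qed.

Lemma Bnd_abs f : Bnd f -> Bnd (fun t => Rabs (f t)).
Proof. intros [M HM]. exists M. intro t. rewrite Rabs_Rabsolu. auto. Qed.

Lemma expK_abs pmf (Hn : forall n, 0 <= pmf n) (Hs : infinite_sum pmf 1) k f :
  Bnd f -> Rabs (expK pmf k f) <= expK pmf k (fun t => Rabs (f t)).
Proof.
  intro Hf. assert (Ha : Bnd (fun t => Rabs (f t))) by (apply Bnd_abs; auto).
  apply Rabs_le. split.
  - rewrite <- (expK_opp pmf Hn Hs k _ Ha). apply expK_mono; auto.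
    + destruct Ha as [M HM]. exists M. intro t. rewrite Rabs_Ropp. auto.
    + intros t _. pose proof (Rle_abs (- f t)) as H. rewrite Rabs_Ropp in H. lra.
  - apply expK_mono; auto. intros; apply Rle_abs.
Qed.

Theorem mainTheorem1 (pmf : nat -> R) (p : R) (K : nat)
  (Hpmf_nonneg : forall n, 0 <= pmf n)
  (Hpmf_pos : pmf 0%nat = 0)
  (Hpmf_sum : infinite_sum pmf 1)
  (HK : (1 <= K)%nat)
  (Hp : 0 < p < 1)
  (Hint : forall t : list nat, length t = K ->
          (forall x, In x t -> 0 < pmf x) ->
          exists m : nat, p * INR (sumV t) = INR m) :
  forall i : nat, (1 <= i <= K)%nat ->
    tv (lawTilde pmf p K i) (Qdist pmf p) <= rhsBound pmf p K.
Proof.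
  intros i Hi.
  set (Hn := Hpmf_nonneg). set (Hs := Hpmf_sum).
  set (j := (i - 1)%nat).
  assert (Hj : (j < K)%nat) by (unfold j; lia).
  set (Bt := fun n t => binom_pmf (nDraw p t) (INR (nth j t 0%nat) / INR (sumV t)) n).
  set (Pt := fun n (t : list nat) => pz (p * INR (nth j t 0%nat)) n).
  set (hh := fun a b => Rmin (p * INR a) 1 * (if le_dec a b then INR a / INR b else 0)).
  assert (Hhh : forall a b, Rabs (hh a b) <= 1).
  { intros a b. unfold hh. rewrite Rabs_mult.
    assert (Rabs (Rmin (p * INR a) 1) <= 1).
    { assert (0 <= p * INR a) by (apply Rmult_le_pos; [lra|apply pos_INR]).
      rewrite Rabs_right. apply Rmin_r. apply Rle_ge. apply Rmin_glb; lra. }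
    destruct (le_dec a b) as [Hab|].
    - pose proof (ratio_01 a b Hab). rewrite (Rabs_right (INR a / INR b)) by lra.
      pose proof (Rabs_pos (Rmin (p * INR a) 1)). nra.
    - rewrite Rabs_R0. pose proof (Rabs_pos (Rmin (p * INR a) 1)). nra. }
  assert (HBt : forall n, Bnd (Bt n)).
  { intro n. exists 1. intro t. unfold Bt.
    pose proof (ratio_01 _ _ (nth_le_sumV j t)).
    rewrite Rabs_right. apply bin_le1; auto. apply Rle_ge, bin_nonneg; auto. }
  assert (HPt : forall n, Bnd (Pt n)).
  { intro n. exists 1. intro t. unfold Pt.
    assert (0 <= p * INR (nth j t 0%nat)) by (apply Rmult_le_pos; [lra|apply pos_INR]).
    rewrite Rabs_right. apply pz_le1; auto. apply Rle_ge, pz_nonneg; auto. }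
  assert (HD : forall n, Bnd (fun t => Bt n t - Pt n t)).
  { intro n. apply (Bnd_plus (Bt n) (fun t => - Pt n t)); auto.
    destruct (HPt n) as [M HM]. exists M. intro t. rewrite Rabs_Ropp. auto. }
  assert (Hlaw : forall n, lawTilde pmf p K i n = expK pmf K (Bt n)) by reflexivity.
  assert (HQ : forall n, Qdist pmf p n = expK pmf K (Pt n)).
  { intro n. unfold Pt. symmetry.
    apply (expK_marg pmf Hn Hs (fun a => pz (p * INR a) n) 1); auto.
    intro a. assert (0 <= p * INR a) by (apply Rmult_le_pos; [lra|apply pos_INR]).
    rewrite Rabs_right. apply pz_le1; auto. apply Rle_ge, pz_nonneg; auto. }
  assert (Hrhs : rhsBound pmf p K = expK pmf K (fun t => hh (nth j t 0%nat) (sumV t))).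
  { rewrite (expK_move pmf Hn Hs hh 1 K Hhh j Hj). unfold rhsBound. f_equal.
    extensionality t. unfold hh. destruct (le_dec _ _) as [|Hn0]; auto.
    exfalso. apply Hn0. apply nth_le_sumV. }
  assert (Hpt : forall N t, supp pmf K t ->
            sum_f_R0 (fun n => Rabs (Bt n t - Pt n t)) N <= 2 * hh (nth j t 0%nat) (sumV t)).
  { intros N t [Hlen Hsup].
    set (v := nth j t 0%nat). set (V := sumV t).
    assert (Hvin : In v t) by (unfold v; apply nth_In; lia).
    assert (Hv1 : (1 <= v)%nat).
    { assert (Hpv := Hsup v Hvin). destruct (Nat.eq_dec v 0) as [E|E]; [|lia].
      rewrite E, Hpmf_pos in Hpv. lra. }
    assert (HvV : (v <= V)%nat) by apply nth_le_sumV.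
    destruct (Hint t Hlen Hsup) as [m Hm].
    assert (HnD : nDraw p t = m) by (apply nDraw_int; auto).
    assert (HV0 : 0 < INR V) by (apply lt_0_INR; lia).
    assert (Hm0 : (1 <= m)%nat).
    { destruct m; [|lia]. simpl in Hm. exfalso. fold V in Hm. nra. }
    destruct m as [|n0]; [lia|].
    set (q := INR v / INR V).
    assert (Hq : 0 < q <= 1).
    { pose proof (ratio_01 v V HvV). split; [|unfold q; lra]. unfold q. apply Rdiv_lt_0_compat; auto. apply lt_0_INR; lia. }
    assert (Hlam : INR (S n0) * q = p * INR v).
    { unfold q. fold V in Hm. rewrite <- Hm. field. lra. }
    assert (H := core_tv n0 q N Hq). rewrite Hlam in H.
    unfold hh. destruct (le_dec v V) as [_|]; [|lia].
    fold q. eapply Rle_trans; [|exact H]. right. apply sum_eq. intros k _.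
    unfold Bt, Pt. fold v V. rewrite HnD. fold q. reflexivity. }
  unfold tv.
  cut (ser (fun n => Rabs (lawTilde pmf p K i n - Qdist pmf p n)) <= 2 * rhsBound pmf p K).
  { intro. lra. }
  apply ser_le_of_partial. intro; apply Rabs_pos.
  intro N.
  apply Rle_trans with (sum_f_R0 (fun n => expK pmf K (fun t => Rabs (Bt n t - Pt n t))) N).
  { apply sum_Rle. intros n _. rewrite Hlaw, HQ.
    assert (HnP : Bnd (fun t => - Pt n t)).
    { destruct (HPt n) as [M HM]. exists M. intro t. rewrite Rabs_Ropp. auto. }
    assert (E : expK pmf K (fun t => Bt n t - Pt n t) = expK pmf K (Bt n) - expK pmf K (Pt n)).
    { unfold Rminus at 2. rewrite <- (expK_opp pmf Hn Hs K (Pt n)) by auto.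
      apply (expK_plus pmf Hn Hs K (Bt n) (fun t => - Pt n t)); auto. }
    rewrite <- E. apply expK_abs; auto. }
  rewrite (expK_sum pmf Hn Hs K (fun n t => Rabs (Bt n t - Pt n t)) N).
  2:{ intro n. apply Bnd_abs; auto. }
  rewrite Hrhs. rewrite <- expK_scal; auto.
  2:{ exists 1. intro; apply Hhh. }
  apply expK_mono; auto.
  - apply Bnd_sum. intro n. apply Bnd_abs; auto.
  - apply Bnd_scal. exists 1. intro; apply Hhh.
Qed.
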